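(* Let $T$ be a rooted binary tree on $n$ leaves with minimal Colless index, i.e. $\mathcal{C}(T)=c_n$. Then $T$ has minimal Sackin index among all rooted binary trees with $n$ leaves.
   Context: A rooted binary tree with $n\geq 2$ leaves is a rooted tree whose root has degree 2 and all other internal nodes have degree 3; for $n=1$ it is a single node. For a node $u$ let $n_u$ be the number of leaves of the subtree rooted at $u$. For an internal node $v$ with children $v_1,v_2$, the Colless index is $\mathcal{C}(T)=\sum_v|n_{v_1}-n_{v_2}|$ over internal nodes $v$; $c_n$ is its minimum over rooted binary trees with $n$ leaves. The Sackin index is $\mathcal{S}(T)=\sum_{u}n_u$, the sum over all internal nodes $u$ of $T$. *)

(* Defs.v *)
From mathcomp Require Import all_boot.

(* Rooted binary trees: a single leaf, or a root with two (ordered) subtrees.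
   The order of children is irrelevant for the Colless and Sackin indices. *)
Inductive tree : Type :=
| Leaf : tree
| Node : tree -> tree -> tree.

Fixpoint leaves (t : tree) : nat :=
  match t with
  | Leaf => 1
  | Node l r => leaves l + leaves r
  end.

Definition absdiff (a b : nat) : nat := (a - b) + (b - a).

Fixpoint colless (t : tree) : nat :=
  match t with
  | Leaf => 0
  | Node l r => absdiff (leaves l) (leaves r) + colless l + colless r
  end.

Fixpoint sackin (t : tree) : nat :=
  match t with
  | Leaf => 0
  | Node l r => leaves l + leaves r + sackin l + sackin r
  end.

Definition colless_minimal (t : tree) : Prop :=
  forall t' : tree, leaves t' = leaves t -> colless t <= colless t'.

Definition sackin_minimal (t : tree) : Prop :=
  forall t' : tree, leaves t' = leaves t -> sackin t <= sackin t'.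

(* Main.v *)
Require Import Defs.
From mathcomp Require Import all_boot.
From mathcomp Require Import zify.

Fixpoint Dm (t : tree) : nat :=
  match t with
  | Leaf => 0
  | Node l r => 2 * minn (leaves l) (leaves r) + Dm l + Dm r
  end.

Inductive bal : tree -> Prop :=
| balL : bal Leaf
| balN l r : bal l -> bal r -> leaves l <= leaves r + 1 ->
    leaves r <= leaves l + 1 -> bal (Node l r).

Lemma leaves_pos t : 0 < leaves t.
Proof. elim: t => //= l Hl r Hr; lia. Qed.

Lemma SCD t : sackin t = colless t + Dm t.
Proof.
elim: t => //= l Hl r Hr; rewrite Hl Hr /absdiff.
have := leaves_pos l; have := leaves_pos r; lia.
Qed.

Lemma bal_ex n : 0 < n -> exists t, bal t /\ leaves t = n.
Proof.
elim/ltn_ind: n => n IH Hn.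
have [->|Hn2] : n = 1 \/ 2 <= n by lia.
  by exists Leaf; split => //; constructor.
have [x [Hx Lx]] := IH (n %/ 2) ltac:(lia) ltac:(lia).
have [y [Hy Ly]] := IH (n - n %/ 2) ltac:(lia) ltac:(lia).
exists (Node x y); split; last by rewrite /= Lx Ly; lia.
constructor => //; rewrite Lx Ly; lia.
Qed.

Arguments bal_ex {n}.

Lemma bal_uniq t1 t2 : bal t1 -> bal t2 -> leaves t1 = leaves t2 ->
  sackin t1 = sackin t2 /\ Dm t1 = Dm t2.
Proof.
elim: t1 t2 => [|l1 IHl r1 IHr] [|l2 r2] //=.
- move=> _ _ H; have := leaves_pos l2; have := leaves_pos r2; lia.
- move=> _ _ H; have := leaves_pos l1; have := leaves_pos r1; lia.
move=> B1 B2 H.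
inversion B1; subst; inversion B2; subst.
have [[E1 E2]|[E1 E2]] : (leaves l1 = leaves l2 /\ leaves r1 = leaves r2) \/
   (leaves l1 = leaves r2 /\ leaves r1 = leaves l2) by lia.
- have [S1 D1] := IHl l2 ltac:(assumption) ltac:(assumption) E1.
  have [S2 D2] := IHr r2 ltac:(assumption) ltac:(assumption) E2.
  rewrite E1 E2 S1 S2 D1 D2; split; lia.
- have [S1 D1] := IHl r2 ltac:(assumption) ltac:(assumption) E1.
  have [S2 D2] := IHr l2 ltac:(assumption) ltac:(assumption) E2.
  rewrite E1 E2 S1 S2 D1 D2; split; lia.
Qed.

Arguments bal_uniq {t1 t2}.

Lemma leaf_add b t tb : bal t -> bal tb -> leaves t = b -> leaves tb = b + 1 ->
  1 <= b -> sackin tb <= sackin t + b + 1 /\ Dm t + 2 <= Dm tb.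
Proof.
move: t tb; elim/ltn_ind: b => b IH t tb Bt Btb Lt Ltb Hb.
have [Eb|Hb2] : b = 1 \/ 2 <= b by lia.
  clear IH; move: Lt Ltb; rewrite Eb => Lt Ltb; case: t Bt Lt => [|l r] Bt Lt; last first.
    move: Lt => /= Lt; have := leaves_pos l; have := leaves_pos r; lia.
  have BN : bal (Node Leaf Leaf) by constructor => //; constructor.
  have [S1 D1] := bal_uniq Btb BN ltac:(by rewrite Ltb).
  by rewrite S1 D1 /=.
have key : forall l r, bal l -> bal r -> leaves r <= leaves l ->
    leaves l <= leaves r + 1 -> leaves l + leaves r = b ->
    sackin tb <= sackin (Node l r) + b + 1 /\ Dm (Node l r) + 2 <= Dm tb.
  move=> l r Bl Br H1 H2 H3.
  have Pl := leaves_pos l; have Pr := leaves_pos r.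
  have [t2 [B2 L2]] := @bal_ex (leaves r + 1) ltac:(lia).
  have [S1 D1] := IH (leaves r) ltac:(lia) r t2 Br B2 erefl L2 Pr.
  have BN : bal (Node l t2) by constructor => //; rewrite L2; lia.
  have [S2 D2] := bal_uniq Btb BN ltac:(by rewrite Ltb /= L2; lia).
  rewrite S2 D2 /= L2; split; lia.
case: t Bt Lt => [|l r] Bt Lt; first by move: Lt => /= Lt; lia.
inversion Bt; subst; simpl in *.
have [H|H] : leaves r <= leaves l \/ leaves l <= leaves r by lia.
  by apply: key => //; lia.
have [S1 D1] := key r l ltac:(assumption) ltac:(assumption) H ltac:(lia) ltac:(lia).
move: S1 D1 => /=; split; lia.
Qed.

Arguments leaf_add {b t tb}.

Lemma leaves1 t : leaves t = 1 -> t = Leaf.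
Proof. case: t => //= l r; have := leaves_pos l; have := leaves_pos r; lia. Qed.

Arguments leaves1 {t}.

Lemma main_ineq N a b ta tb tn : a + b <= N -> bal ta -> bal tb -> bal tn ->
  leaves ta = a -> leaves tb = b -> leaves tn = a + b -> 1 <= a -> 1 <= b ->
  sackin tn <= sackin ta + sackin tb + a + b /\
  Dm ta + Dm tb + 2 * minn a b <= Dm tn.
Proof.
elim: N a b ta tb tn => [|N IH] a b ta tb tn HN Ba Bb Bn La Lb Ln Ha Hb; first lia.
have [Ea|Ha2] : a = 1 \/ 2 <= a by lia.
  rewrite Ea in La Ln *; rewrite (leaves1 La) /=.
  have [S1 D1] := leaf_add Bb Bn Lb ltac:(lia) Hb.
  split; lia.
have [Eb|Hb2] : b = 1 \/ 2 <= b by lia.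
  rewrite Eb in Lb Ln *; rewrite (leaves1 Lb) /=.
  have [S1 D1] := leaf_add Ba Bn La ltac:(lia) Ha.
  split; lia.
have key : forall u1 u2 v1 v2, bal u1 -> bal u2 -> bal v1 -> bal v2 ->
   leaves u1 + leaves u2 = a -> leaves v1 + leaves v2 = b ->
   leaves u1 <= leaves u2 + 1 -> leaves u2 <= leaves u1 + 1 ->
   leaves v1 <= leaves v2 + 1 -> leaves v2 <= leaves v1 + 1 ->
   leaves u1 + leaves v1 <= leaves u2 + leaves v2 + 1 ->
   leaves u2 + leaves v2 <= leaves u1 + leaves v1 + 1 ->
   sackin tn <= (a + sackin u1 + sackin u2) + (b + sackin v1 + sackin v2) + a + b /\
   (2 * minn (leaves u1) (leaves u2) + Dm u1 + Dm u2) +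
   (2 * minn (leaves v1) (leaves v2) + Dm v1 + Dm v2) + 2 * minn a b <= Dm tn.
  move=> u1 u2 v1 v2 Bu1 Bu2 Bv1 Bv2 Hu Hv h1 h2 h3 h4 h5 h6.
  have P1 := leaves_pos u1; have P2 := leaves_pos u2.
  have P3 := leaves_pos v1; have P4 := leaves_pos v2.
  have [x [Bx Lx]] := @bal_ex (leaves u1 + leaves v1) ltac:(lia).
  have [y [By Ly]] := @bal_ex (leaves u2 + leaves v2) ltac:(lia).
  have [S1 D1] := IH (leaves u1) (leaves v1) u1 v1 x ltac:(lia) Bu1 Bv1 Bx erefl erefl Lx P1 P3.
  have [S2 D2] := IH (leaves u2) (leaves v2) u2 v2 y ltac:(lia) Bu2 Bv2 By erefl erefl Ly P2 P4.
  have BN : bal (Node x y) by constructor => //; rewrite Lx Ly; lia.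
  have [S3 D3] := bal_uniq Bn BN ltac:(by rewrite Ln /= Lx Ly; lia).
  rewrite S3 D3 /= Lx Ly; split; lia.
case: ta Ba La => [|a1 a2] Ba La; first by move: La => /= La; lia.
case: tb Bb Lb => [|b1 b2] Bb Lb; first by move: Lb => /= Lb; lia.
inversion Ba; subst; inversion Bb; subst; simpl in *.
have [P|P] : (leaves a1 + leaves b1 <= leaves a2 + leaves b2 + 1 /\
              leaves a2 + leaves b2 <= leaves a1 + leaves b1 + 1) \/
             (leaves a1 + leaves b2 <= leaves a2 + leaves b1 + 1 /\
              leaves a2 + leaves b1 <= leaves a1 + leaves b2 + 1) by lia.
- have [S1 D1] := key a1 a2 b1 b2 ltac:(assumption) ltac:(assumption)
    ltac:(assumption) ltac:(assumption) ltac:(lia) ltac:(lia) ltac:(lia)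
    ltac:(lia) ltac:(lia) ltac:(lia) ltac:(lia) ltac:(lia).
  simpl; split; lia.
- have [S1 D1] := key a1 a2 b2 b1 ltac:(assumption) ltac:(assumption)
    ltac:(assumption) ltac:(assumption) ltac:(lia) ltac:(lia) ltac:(lia)
    ltac:(lia) ltac:(lia) ltac:(lia) ltac:(lia) ltac:(lia).
  simpl; split; lia.
Qed.

Arguments main_ineq {N a b ta tb tn}.

Lemma bal_best t tb : bal tb -> leaves t = leaves tb ->
  sackin tb <= sackin t /\ Dm t <= Dm tb.
Proof.
elim: t tb => [|l IHl r IHr] tb Btb L.
  by rewrite (leaves1 (esym L)).
have [x [Bx Lx]] := bal_ex (leaves_pos l).
have [y [By Ly]] := bal_ex (leaves_pos r).
have [S1 D1] := IHl x Bx (esym Lx).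
have [S2 D2] := IHr y By (esym Ly).
have [S3 D3] := main_ineq (leqnn _) Bx By Btb Lx Ly (esym L)
  (leaves_pos l) (leaves_pos r).
simpl; split; lia.
Qed.

Arguments bal_best t {tb}.

Theorem proposition3 (n : nat) (T : tree) :
  leaves T = n -> colless_minimal T -> sackin_minimal T.
Proof.
move=> _ HC t' Lt.
have [tb [Btb Lb]] := bal_ex (leaves_pos T).
have [_ D1] := bal_best T Btb (esym Lb).
have HCb := HC tb Lb.
have [S2 _] := bal_best t' Btb (etrans Lt (esym Lb)).
have E1 := SCD T; have E2 := SCD tb.
lia.
Qed.
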